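(* Let $A=(A_1,\dots,A_n)\in\mathbb{Z}^{d\times n}$ have rank $d$. The Basic Generalized Euclidean Algorithm (described in the context) terminates on input $A$, and the matrix $B$ it returns is a basis of $\mathcal{L}(A)$, i.e. $B\in\mathbb{Z}^{d\times d}$ and $\mathcal{L}(B)=\mathcal{L}(A)$.
   Context: For a matrix $M$ with columns $M_1,\dots,M_m$, $\mathcal{L}(M)=\{\sum_i\lambda_iM_i:\lambda\in\mathbb{Z}^m\}$. For real $y$, $\lfloor y\rceil:=\lfloor y+1/2\rfloor$ is the nearest integer. Basic Generalized Euclidean Algorithm. Input: $A=(A_1,\dots,A_n)\in\mathbb{Z}^{d\times n}$ of rank $d$. 1. Choose $d$ linearly independent columns of $A$ and let $B=(B_1,\dots,B_d)$ be the matrix they form. Let $C$ be the multiset of the remaining $n-d$ columns. 2. While $C\neq\emptyset$: - choose any $c\in C$ and compute $x\in\mathbb{Q}^d$ with $Bx=c$; - if $x\in\mathbb{Z}^d$, remove $c$ from $C$; - otherwise choose an index $\ell$ with $x_\ell\notin\mathbb{Z}$, remove $c$ from $C$, add the current column $B_\ell$ to $C$, and replace the column $B_\ell$ by $c-\bigl(B_\ell\lfloor x_\ell\rceil+\sum_{j\neq\ell}B_j\lfloor x_j\rfloor\bigr)$. 3. Return $B$. *)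

(* Defs.v *)
From mathcomp Require Import all_boot all_order all_algebra.
Set Implicit Arguments. Unset Strict Implicit. Unset Printing Implicit Defensive.
Import Order.TTheory GRing.Theory Num.Theory.
Local Open Scope ring_scope.

Definition toQ {m k : nat} (M : 'M[int]_(m, k)) : 'M[rat]_(m, k) :=
  map_mx (fun z : int => z%:~R) M.

Definition round_rat (y : rat) : int := Num.floor (y + 2%:R^-1).

Definition in_lattice {d m : nat} (M : 'M[int]_(d, m)) (v : 'cV[int]_d) : Prop :=
  exists lam : 'cV[int]_m, v = M *m lam.

Definition same_lattice {d m k : nat} (M : 'M[int]_(d, m)) (N : 'M[int]_(d, k)) : Prop :=
  forall v, in_lattice M v <-> in_lattice N v.

(* state of the algorithm: current basis B (columns B_1..B_d) and multiset C *)
Definition gea_state (d : nat) := ('M[int]_d * seq 'cV[int]_d)%type.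

Definition set_col {d : nat} (B : 'M[int]_d) (l : 'I_d) (w : 'cV[int]_d) : 'M[int]_d :=
  \matrix_(i, k) if k == l then w i ord0 else B i k.

Definition reduced_col {d : nat} (B : 'M[int]_d) (c : 'cV[int]_d)
    (x : 'cV[rat]_d) (l : 'I_d) : 'cV[int]_d :=
  c - (col l B *~ round_rat (x l ord0)
       + \sum_(j < d | j != l) col j B *~ Num.floor (x j ord0)).

(* one iteration of the while loop (all admissible choices) *)
Inductive gea_step {d : nat} : gea_state d -> gea_state d -> Prop :=
| gea_step_int (B : 'M[int]_d) (C : seq 'cV[int]_d) (c : 'cV[int]_d) (x : 'cV[rat]_d) :
    c \in C -> toQ B *m x = toQ c -> (forall j, x j ord0 \is a Num.int) ->
    gea_step (B, C) (B, rem c C)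
| gea_step_red (B : 'M[int]_d) (C : seq 'cV[int]_d) (c : 'cV[int]_d) (x : 'cV[rat]_d) (l : 'I_d) :
    c \in C -> toQ B *m x = toQ c -> x l ord0 \isn't a Num.int ->
    gea_step (B, C) (set_col B l (reduced_col B c x l), col l B :: rem c C).

Inductive gea_reachable {d : nat} (s : gea_state d) : gea_state d -> Prop :=
| gea_refl : gea_reachable s s
| gea_trans t u : gea_reachable s t -> gea_step t u -> gea_reachable s u.

Definition sel_cols {d n : nat} (A : 'M[int]_(d, n)) (f : 'I_d -> 'I_n) : 'M[int]_d :=
  \matrix_(i, j) A i (f j).

Definition gea_init {d n : nat} (A : 'M[int]_(d, n)) (f : 'I_d -> 'I_n) : gea_state d :=
  (sel_cols A f, [seq col j A | j <- enum 'I_n & j \notin codom f]).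

(* Main.v *)
Require Import Defs.
From mathcomp Require Import all_boot all_order all_algebra.
Import Order.TTheory GRing.Theory Num.Theory.
Set Implicit Arguments. Unset Strict Implicit.
Local Open Scope ring_scope.
From mathcomp Require Import ring lra zify.

Definition setc (R : comPzRingType) d (M : 'M[R]_d) (l : 'I_d) (w : 'cV[R]_d) : 'M[R]_d :=
  \matrix_(i, k) if k == l then w i ord0 else M i k.

Lemma cofactor_setc (R : comPzRingType) d (M : 'M[R]_d) l w i :
  cofactor (setc M l w) i l = cofactor M i l.
Proof.
rewrite /cofactor; congr (_ * _); congr (\det _).
apply/matrixP => a b; rewrite !mxE.
by rewrite eq_sym (negbTE (neq_lift l b)).
Qed.

Lemma det_setc (R : comPzRingType) d (M : 'M[R]_d) l (z : 'cV[R]_d) :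
  \det (setc M l (M *m z)) = z l 0 * \det M.
Proof.
rewrite (expand_det_col _ l).
under eq_bigr => i _ do rewrite cofactor_setc mxE eqxx mxE big_distrl /=.
rewrite exchange_big /=.
transitivity (\sum_j z j 0 * ((\adj M *m M) l j)).
  apply: eq_bigr => j _; rewrite mxE big_distrr /=; apply: eq_bigr => i _.
  by rewrite [in RHS]mxE; ring.
rewrite mul_adj_mx (bigD1 l) //= big1 ?addr0; first by rewrite mxE eqxx mulr1n.
by move=> j /negbTE nj; rewrite mxE eq_sym nj mulr0n mulr0.
Qed.

Section Aux.
Variable d : nat.
Implicit Types B : 'M[int]_d.

Lemma toQE m k (M : 'M[int]_(m, k)) i j : toQ M i j = (M i j)%:~R.
Proof. by rewrite /toQ /map_mx mxE. Qed.

Lemma toQ_inj m k (M N : 'M[int]_(m, k)) : toQ M = toQ N -> M = N.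
Proof.
move=> h; apply/matrixP => i j; have := congr1 (fun X : 'M[rat]_(m,k) => X i j) h.
by rewrite !toQE => /intr_inj.
Qed.

Lemma toQ_mul m k p (M : 'M[int]_(m, k)) (N : 'M[int]_(k, p)) :
  toQ (M *m N) = toQ M *m toQ N.
Proof. exact: map_mxM. Qed.

Lemma toQ_sub m k (M N : 'M[int]_(m, k)) : toQ (M - N) = toQ M - toQ N.
Proof. exact: map_mxB. Qed.

Lemma toQ_det B : \det (toQ B) = (\det B)%:~R.
Proof. exact: det_map_mx. Qed.

Lemma colsum m k (M : 'M[int]_(m, k)) (y : 'cV[int]_k) :
  M *m y = \sum_j col j M *~ y j 0.
Proof.
apply/matrixP => i o; rewrite mxE summxE; apply: eq_bigr => j _.
by rewrite -scaler_int !mxE (ord1 o) intz mulrC.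
Qed.

Definition yv (x : 'cV[rat]_d) (l : 'I_d) : 'cV[int]_d :=
  \col_j (if j == l then round_rat (x j 0) else Num.floor (x j 0)).

Lemma red_eq B c x l : reduced_col B c x l = c - B *m yv x l.
Proof.
rewrite /reduced_col colsum [in RHS](bigD1 l) //= /yv !mxE eqxx; congr (_ - (_ + _)).
by apply: eq_bigr => j /negbTE nj; rewrite mxE nj.
Qed.

Lemma toQ_setcol B l w : toQ (set_col B l w) = setc (toQ B) l (toQ w).
Proof. by apply/matrixP => i k; rewrite toQE !mxE; case: eqP. Qed.

Lemma det_red B c x l : toQ B *m x = toQ c ->
  (\det (set_col B l (reduced_col B c x l)))%:~R
    = (x l 0 - (round_rat (x l 0))%:~R) * (\det B)%:~R :> rat.
Proof.
move=> hx; rewrite -!toQ_det toQ_setcol red_eq toQ_sub toQ_mul -hx -mulmxBr det_setc.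
by rewrite !mxE eqxx.
Qed.

Lemma round_bound (y : rat) : `|y - (round_rat y)%:~R| <= 2^-1.
Proof.
rewrite /round_rat; have /andP[h1 h2] := floor_itv (y + 2^-1).
move: h1 h2; rewrite intrD; set f := (Num.floor _)%:~R => h1 h2.
rewrite ler_norml; apply/andP; split; lra.
Qed.

Lemma round_neq (y : rat) : y \isn't a Num.int -> y - (round_rat y)%:~R != 0.
Proof.
move=> hy; rewrite subr_eq0; apply: contra hy => /eqP ->; exact: intr_int.
Qed.
End Aux.

Definition zsub d (P : 'cV[int]_d -> Prop) :=
  P 0 /\ (forall u v, P u -> P v -> P (u - v)).

Section Zsub.
Variables (d : nat) (P : 'cV[int]_d -> Prop) (hP : zsub P).

Lemma zN u : P u -> P (- u).
Proof. by case: hP => h0 hB hu; rewrite -sub0r; apply: hB. Qed.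

Lemma zD u v : P u -> P v -> P (u + v).
Proof. by case: hP => h0 hB hu hv; rewrite -[v]opprK; apply: hB => //; apply: zN. Qed.

Lemma zMn u n : P u -> P (u *+ n).
Proof. by move=> hu; elim: n => [|n IH]; [rewrite mulr0n; case: hP | rewrite mulrS; apply: zD]. Qed.

Lemma zMz u k : P u -> P (u *~ k).
Proof. by move=> hu; case: k => n; [exact: zMn | rewrite NegzE mulrNz; apply/zN/zMn]. Qed.

Lemma zsum (I : finType) (Q : pred I) (F : I -> 'cV[int]_d) :
  (forall i, Q i -> P (F i)) -> P (\sum_(i | Q i) F i).
Proof. by move=> h; apply: big_ind => //; [case: hP | exact: zD]. Qed.

Lemma zmul m (M : 'M[int]_(d, m)) y : (forall j, P (col j M)) -> P (M *m y).
Proof. by move=> h; rewrite colsum; apply: zsum => j _; apply: zMz. Qed.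
End Zsub.

Definition Linv d n (A : 'M[int]_(d, n)) (s : gea_state d) :=
  forall P, zsub P ->
    ((forall j, P (col j s.1)) /\ (forall c, c \in s.2 -> P c)) <-> (forall j, P (col j A)).

Lemma col_setcol d (B : 'M[int]_d) l w k :
  col k (set_col B l w) = if k == l then w else col k B.
Proof. case: eqP => [->|/eqP/negbTE nk]; apply/matrixP => i o; rewrite !mxE ?eqxx ?nk //; by rewrite (ord1 o). Qed.

Lemma mem_remP (T : eqType) (c c' : T) C : c \in C -> c' \in C -> c' = c \/ c' \in rem c C.
Proof.
move=> hc hc'; have := perm_mem (perm_to_rem hc); move=> /(_ c'); rewrite hc' in_cons.
by case/esym/orP => [/eqP|]; auto.
Qed.

Lemma int_vec d (x : 'cV[rat]_d) : (forall j, x j 0 \is a Num.int) ->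
  x = toQ (\col_j Num.floor (x j 0)).
Proof.
by move=> h; apply/matrixP => i o; rewrite toQE mxE (ord1 o) floorK.
Qed.

Lemma Linv_step d n (A : 'M[int]_(d, n)) s t : gea_step s t -> Linv A s -> Linv A t.
Proof.
case=> {s t} B C c x.
- move=> hc hx hint hL P hP; rewrite -(hL P hP) /=.
  have ec : c = B *m \col_j Num.floor (x j 0).
    by apply: toQ_inj; rewrite toQ_mul -int_vec.
  split=> -[h1 h2]; split=> // c' hc'.
    have [->|] := mem_remP hc hc'; last exact: h2.
    by rewrite ec; apply: zmul.
  by apply: h2; exact: mem_rem hc'.
- move=> l hc hx hnint hL P hP; rewrite -(hL P hP) /= red_eq.
  split=> -[h1 h2]; last first.
    have hw : P (c - B *m yv x l).
      have [_ hB] := hP; apply: hB; [exact: h2 | exact: zmul].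
    split=> [k|c']; first by rewrite col_setcol; case: eqP.
    rewrite in_cons => /orP[/eqP ->|/mem_rem]; [exact: h1 | exact: h2].
  have h1' : forall j, P (col j B).
    move=> j; case: (eqVneq j l) => [->|nj]; first by apply: h2; rewrite in_cons eqxx.
    by have := h1 j; rewrite col_setcol (negbTE nj).
  split=> // c' hc'.
  have [->|] := mem_remP hc hc'; last by move=> h; apply: h2; rewrite in_cons h orbT.
  have -> : c = (c - B *m yv x l) + B *m yv x l by rewrite subrK.
  apply: zD => //; last exact: zmul.
  by have := h1 l; rewrite col_setcol eqxx.
Qed.

Definition mu d (s : gea_state d) := (absz (\det s.1) * (size s.2).+1)%N.

Lemma det_step d (s t : gea_state d) : gea_step s t -> \det s.1 != 0 ->
  \det t.1 != 0 /\ (mu t < mu s)%N.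
Proof.
rewrite /mu; case=> {s t} B C c x.
- move=> hc _ _ hd /=; split=> //.
  have hs := size_rem hc; have : (0 < size C)%N by case: (C) hc.
  have : (0 < absz (\det B))%N by rewrite absz_gt0.
  move=> ha hC; rewrite hs prednK // ltn_pmul2l //.
- move=> l hc hx hni hd /=; rewrite size_rem // prednK; last by case: (C) hc.
  have e := @det_red _ B c x l hx; set e1 := (x l 0 - _) in e.
  have hb := round_bound (x l 0); have hn := round_neq hni.
  rewrite -/e1 in hb hn.
  have hdQ : (\det B)%:~R != 0 :> rat by rewrite intr_eq0.
  split.
    by rewrite -(intr_eq0 rat) e mulf_neq0.
  have : `|(\det (set_col B l (reduced_col B c x l)))%:~R| < `|(\det B)%:~R : rat|.
    rewrite e normrM; have hp : 0 < `|(\det B)%:~R : rat| by rewrite normr_gt0.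
    have : `|e1| * `|(\det B)%:~R : rat| <= 2^-1 * `|(\det B)%:~R : rat|.
      by rewrite ler_pM2r.
    move: hp; set D := `|_|; lra.
  rewrite -!intr_norm ltr_int => h.
  rewrite ltn_pmul2r //; lia.
Qed.

Lemma acc_all d : forall k (s : gea_state d), (mu s < k)%N -> \det s.1 != 0 ->
  Acc (fun t s => gea_step s t) s.
Proof.
elim=> [//|k IH] s hk hd; constructor => t hst.
have [hd' hm] := det_step hst hd; apply: IH => //; lia.
Qed.

Lemma reach_inv d n (A : 'M[int]_(d, n)) s0 s : gea_reachable s0 s ->
  \det s0.1 != 0 -> Linv A s0 -> \det s.1 != 0 /\ Linv A s.
Proof.
move=> r h1 h2; elim: r => [|t u _ [IH1 IH2] hst]; first by [].
by split; [case: (det_step hst IH1) | exact: Linv_step hst IH2].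
Qed.

Lemma lat_col d m (M : 'M[int]_(d, m)) j : in_lattice M (col j M).
Proof. by exists (delta_mx j 0); rewrite colE. Qed.

Lemma lat_zsub d m (M : 'M[int]_(d, m)) : zsub (in_lattice M).
Proof.
split; first by exists 0; rewrite mulmx0.
by move=> u v [a ->] [b ->]; exists (a - b); rewrite mulmxBr.
Qed.

Lemma lat_sub d m k (M : 'M[int]_(d, m)) (N : 'M[int]_(d, k)) :
  (forall j, in_lattice N (col j M)) -> forall v, in_lattice M v -> in_lattice N v.
Proof. by move=> h v [lam ->]; apply: zmul => //; exact: lat_zsub. Qed.

Theorem theorem1 (d n : nat) (A : 'M[int]_(d, n))
    (hA : \rank (toQ A) = d)
    (f : 'I_d -> 'I_n) (hf : injective f)
    (hB : row_free (toQ (sel_cols A f))^T) :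
  (* termination: no infinite run, whatever choices are made *)
  Acc (fun t s => gea_step s t) (gea_init A f) /\
  (* the loop never gets stuck while C is nonempty *)
  (forall s, gea_reachable (gea_init A f) s -> s.2 != [::] ->
     exists t, gea_step s t) /\
  (* the returned B is a basis of L(A) *)
  (forall s, gea_reachable (gea_init A f) s -> s.2 = [::] ->
     same_lattice s.1 A).
Proof.
have hd0 : \det (gea_init A f).1 != 0.
  move: hB; rewrite row_free_unit unitmx_tr unitmxE unitfE /= toQ_det.
  by rewrite intr_eq0.
have hL0 : Linv A (gea_init A f).
  move=> P hP /=; split.
    move=> [h1 h2] j; case: (boolP (j \in codom f)) => [/codomP [k ->]|hj].
      have -> : col (f k) A = col k (sel_cols A f).
        by apply/matrixP => i o; rewrite !mxE.
      exact: h1.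
    by apply: h2; apply: map_f; rewrite mem_filter hj mem_enum.
  move=> h; split.
    move=> j; have -> : col j (sel_cols A f) = col (f j) A.
      by apply/matrixP => i o; rewrite !mxE.
    exact: h.
  by move=> c /mapP [j _ ->].
split; first exact: (@acc_all d (mu (gea_init A f)).+1).
split.
  move=> [B C] r; case: C r => [//|c C'] r _ /=; have [hd _] := reach_inv r hd0 hL0.
  have hU : toQ B \in unitmx by rewrite unitmxE unitfE toQ_det intr_eq0.
  set x := invmx (toQ B) *m toQ c.
  have hx : toQ B *m x = toQ c by rewrite mulKVmx.
  have hc : c \in c :: C' by rewrite in_cons eqxx.
  case: (boolP [forall j, x j 0 \is a Num.int]) => [/forallP hi|].
    by eexists; apply: gea_step_int hc hx hi.
  rewrite negb_forall => /existsP [l hl].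
  by eexists; apply: gea_step_red hc hx hl.
move=> [B C] r /= hC; have [_ hL] := reach_inv r hd0 hL0.
rewrite hC in hL.
have key : forall P, zsub P -> (forall j, P (col j B)) <-> (forall j, P (col j A)).
  move=> P hP; rewrite -(hL P hP) /=; split; [by move=> h; split | by case].
move=> v; split; apply: lat_sub => j.
  by move: j; apply/(key _ (lat_zsub A)) => j; exact: lat_col.
by move: j; apply/(key _ (lat_zsub B)) => j; exact: lat_col.
Qed.
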